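(* Let $N(n)$ be the number of inflection points of the Hilbert curve $H_n$. Then $N(1)=4$, $N(2k)=4N(2k-1)-2$ and $N(2k+1)=4N(2k)-4$ for all $k\ge1$, and hence $$N(n)=\begin{cases}\dfrac{4^{n+1}+4}{5}, & n \text{ odd},\\[2mm] \dfrac{4^{n+1}+6}{5}, & n\text{ even}.\end{cases}$$
   Context: The Hilbert curve at step $n$ is the polygon $H_n$ in the unit square defined recursively: $H_1$ has vertices $(\tfrac14,\tfrac14),(\tfrac14,\tfrac34),(\tfrac34,\tfrac34),(\tfrac34,\tfrac14)$; $H_{n+1}$ is the concatenation (in this order, joined by the connecting edges) of $f_1(H_n),f_2(H_n),f_3(H_n),f_4(H_n)$, where $f_1(x,y)=(\tfrac y2,\tfrac x2)$, $f_2(x,y)=(\tfrac x2,\tfrac y2+\tfrac12)$, $f_3(x,y)=(\tfrac x2+\tfrac12,\tfrac y2+\tfrac12)$, $f_4(x,y)=(1-\tfrac y2,\tfrac12-\tfrac x2)$, each copy traversed in the order inherited from $H_n$. The inflection points of $H_n$ are the vertices of $H_n$, in order, after deleting every interior vertex whose two neighbouring vertices are collinear with it (endpoints are kept). *)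

(* Defs.v *)
From HB Require Import structures.
From mathcomp Require Import all_boot all_order all_algebra.
Set Implicit Arguments. Unset Strict Implicit. Unset Printing Implicit Defensive.
Import Order.TTheory GRing.Theory Num.Theory.

Local Open Scope ring_scope.

Definition pt := (rat * rat)%type.

Definition f1 (p : pt) : pt := (p.2 / 2, p.1 / 2).
Definition f2 (p : pt) : pt := (p.1 / 2, p.2 / 2 + 1 / 2).
Definition f3 (p : pt) : pt := (p.1 / 2 + 1 / 2, p.2 / 2 + 1 / 2).
Definition f4 (p : pt) : pt := (1 - p.2 / 2, 1 / 2 - p.1 / 2).

Definition H1 : seq pt :=
  [:: (1/4, 1/4); (1/4, 3/4); (3/4, 3/4); (3/4, 1/4)].

(* Hilbert n = the vertex list of H_n for n >= 1 (H_0 is unused, set to [::]). *)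
Fixpoint Hilbert (n : nat) : seq pt :=
  match n with
  | 0%N => [::]
  | m.+1 =>
    match m with
    | 0%N => H1
    | _ => map f1 (Hilbert m) ++ map f2 (Hilbert m) ++ map f3 (Hilbert m)
             ++ map f4 (Hilbert m)
    end
  end.

Definition collinear (a b c : pt) : bool :=
  (b.1 - a.1) * (c.2 - a.2) - (b.2 - a.2) * (c.1 - a.1) == 0.

Definition keep (s : seq pt) (i : nat) : bool :=
  [|| i == 0%N, i == (size s).-1 |
      ~~ collinear (nth (0, 0) s i.-1) (nth (0, 0) s i) (nth (0, 0) s i.+1)].

Definition inflection_points (s : seq pt) : seq pt :=
  [seq nth (0, 0) s i | i <- iota 0 (size s) & keep s i].

Definition N (n : nat) : nat := size (inflection_points (Hilbert n)).

(* Main.v *)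
Require Import Defs.
From mathcomp Require Import all_boot all_order all_algebra.
From mathcomp Require Import ring zify.
Set Implicit Arguments. Unset Strict Implicit. Unset Printing Implicit Defensive.
Import Order.TTheory GRing.Theory Num.Theory.

Definition det (a b c : pt) : rat :=
  ((b.1 - a.1) * (c.2 - a.2) - (b.2 - a.2) * (c.1 - a.1))%R.
Definition ncol (a b c : pt) : nat := ~~ collinear a b c.
Definition win (a : pt) (t : seq pt) : nat :=
  if t is b :: c :: _ then ncol a b c else 0.
Fixpoint cnt (s : seq pt) : nat := if s is a :: t then win a t + cnt t else 0.

Lemma cnt_cat s x y t :
  cnt (rcons (rcons s x) y ++ t) = cnt (rcons (rcons s x) y) + cnt (x :: y :: t).
Proof.
elim: s => [|a s IH] /=; first by rewrite /win /=.
rewrite IH addnA; congr (_ + _ + _).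
by case: s {IH} => [|b [|c s]].
Qed.

Lemma cat2 A B x y u v : (exists s, A = rcons (rcons s x) y) ->
  (exists t, B = u :: v :: t) ->
  cnt (A ++ B) = cnt A + (ncol x y u + ncol y u v) + cnt B.
Proof.
move=> [s ->] [t ->]; rewrite cnt_cat /= /win /=.
case: t => [|w t]; rewrite /= ?addn0 ?addnA //.
Qed.

Lemma cnt_map f s : (forall a b c, collinear (f a) (f b) (f c) = collinear a b c) ->
  cnt (map f s) = cnt s.
Proof.
move=> Hf; elim: s => [|a s IH] //=; rewrite IH; congr (_ + _).
by case: s {IH} => [|b [|c s]] //=; rewrite /win /ncol Hf.
Qed.

Lemma eq0_scale (x y k : rat) : (k != 0 -> x = k * y -> (x == 0) = (y == 0))%R.
Proof. by move=> kn0 ->; rewrite mulf_eq0 (negbTE kn0). Qed.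

Lemma col_f1 a b c : collinear (f1 a) (f1 b) (f1 c) = collinear a b c.
Proof.
case: a => a1 a2; case: b => b1 b2; case: c => c1 c2; rewrite /collinear /f1 /=.
apply: (@eq0_scale _ _ (-(1/4)))%R => //; by field.
Qed.
Lemma col_f2 a b c : collinear (f2 a) (f2 b) (f2 c) = collinear a b c.
Proof.
case: a => a1 a2; case: b => b1 b2; case: c => c1 c2; rewrite /collinear /f2 /=.
apply: (@eq0_scale _ _ (1/4)) => //; by field.
Qed.
Lemma col_f3 a b c : collinear (f3 a) (f3 b) (f3 c) = collinear a b c.
Proof.
case: a => a1 a2; case: b => b1 b2; case: c => c1 c2; rewrite /collinear /f3 /=.
apply: (@eq0_scale _ _ (1/4)) => //; by field.
Qed.
Lemma col_f4 a b c : collinear (f4 a) (f4 b) (f4 c) = collinear a b c.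
Proof.
case: a => a1 a2; case: b => b1 b2; case: c => c1 c2; rewrite /collinear /f4 /=.
apply: (@eq0_scale _ _ (-(1/4)))%R => //; by field.
Qed.

Lemma ncol0 a b c : (det a b c = 0)%R -> ncol a b c = 0.
Proof. by rewrite /ncol /collinear -/(det a b c) => ->; rewrite eqxx. Qed.
Lemma ncol1 (e : rat) a b c : (e != 0)%R -> (det a b c = e * e \/ det a b c = - (e * e))%R ->
  ncol a b c = 1.
Proof.
move=> en0 H; rewrite /ncol /collinear -/(det a b c).
have : det a b c != 0%R by case: H => ->; rewrite ?oppr_eq0 mulf_neq0.
by case: (det a b c == 0%R).
Qed.

Lemma HilbertS m : Hilbert m.+2 =
  map f1 (Hilbert m.+1) ++ map f2 (Hilbert m.+1) ++ map f3 (Hilbert m.+1)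
  ++ map f4 (Hilbert m.+1).
Proof. by []. Qed.
Definition Apt (e : rat) : pt := (e, e).
Definition Bpt (b : bool) (e : rat) : pt := if b then (e, 3 * e)%R else (3 * e, e)%R.
Definition Cpt (b : bool) (e : rat) : pt := if b then (1 - e, 3 * e)%R else (1 - 3 * e, e)%R.
Definition Dpt (e : rat) : pt := (1 - e, e)%R.

Definition shape (b : bool) (h : seq pt) : Prop :=
  exists e : rat, (e != 0)%R /\ (exists t, h = Apt e :: Bpt b e :: t) /\
     (exists s, h = rcons (rcons s (Cpt b e)) (Dpt e)).

Lemma shape_all m : shape (odd m.+1) (Hilbert m.+1).
Proof.
elim: m => [|m IH].
  exists (1/4)%R; split => //; split.
    exists [:: (3/4, 3/4); (3/4, 1/4)]%R; rewrite /= /H1 /Apt /Bpt.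
    by congr (_ :: _ :: _); congr (_, _); apply/eqP.
  exists [:: (1/4, 1/4); (1/4, 3/4)]%R; rewrite /= /H1 /Cpt /Dpt.
  by congr (_ :: _ :: _ :: _ :: _); congr (_, _); apply/eqP.
rewrite HilbertS; have -> : odd m.+2 = ~~ odd m.+1 by [].
move: (Hilbert m.+1) IH => h.
case: (odd m.+1) => -[e [en0 [[t Ht] [s Hs]]]]; exists (e / 2)%R; (split;
  [by rewrite mulf_neq0 // invr_eq0 | split]).
- exists (map f1 t ++ map f2 h ++ map f3 h ++ map f4 h); rewrite {1}Ht /=.
  by congr (_ :: _ :: _); rewrite /f1 /Apt /Bpt /=; congr (_, _); field.
- exists (map f1 h ++ map f2 h ++ map f3 h ++ map f4 s).
  rewrite [in map f4 _]Hs !map_rcons !rcons_cat.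
  by congr (_ ++ (_ ++ (_ ++ rcons (rcons _ _) _))); rewrite /f4 /Cpt /Dpt /=;
    congr (_, _); field.
- exists (map f1 t ++ map f2 h ++ map f3 h ++ map f4 h); rewrite {1}Ht /=.
  by congr (_ :: _ :: _); rewrite /f1 /Apt /Bpt /=; congr (_, _); field.
- exists (map f1 h ++ map f2 h ++ map f3 h ++ map f4 s).
  rewrite [in map f4 _]Hs !map_rcons !rcons_cat.
  by congr (_ ++ (_ ++ (_ ++ rcons (rcons _ _) _))); rewrite /f4 /Cpt /Dpt /=;
    congr (_, _); field.
Qed.
Lemma map_last (f : pt -> pt) h b e : (exists s, h = rcons (rcons s (Cpt b e)) (Dpt e)) ->
  exists s, map f h = rcons (rcons s (f (Cpt b e))) (f (Dpt e)).
Proof. by move=> [s ->]; exists (map f s); rewrite !map_rcons. Qed.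

Lemma map_first (f : pt -> pt) h b e X : (exists t, h = Apt e :: Bpt b e :: t) ->
  exists t, map f h ++ X = f (Apt e) :: f (Bpt b e) :: t.
Proof. by move=> [t ->]; exists (map f t ++ X). Qed.

Lemma cnt_step m : cnt (Hilbert m.+2) = 4 * cnt (Hilbert m.+1) + (if odd m.+1 then 4 else 2).
Proof.
rewrite HilbertS; have := shape_all m; move: (Hilbert m.+1) => h.
move=> [e [en0 [Ht Hs]]].
rewrite (cat2 (map_last f1 Hs) (map_first f2 _ Ht)).
rewrite (cat2 (map_last f2 Hs) (map_first f3 _ Ht)).
have H4 : exists t, map f4 h = f4 (Apt e) :: f4 (Bpt (odd m.+1) e) :: t.
  by case: Ht => t ->; exists (map f4 t).
rewrite (cat2 (map_last f3 Hs) H4).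
rewrite !cnt_map; try (exact: col_f1); try (exact: col_f2); try (exact: col_f3); try (exact: col_f4).
case: (odd m.+1);
repeat match goal with |- context[ncol ?a ?b ?c] =>
  (rewrite (@ncol0 a b c); [ | by rewrite /det /Apt /Bpt /Cpt /Dpt /f1 /f2 /f3 /f4 /=; field])
  || (rewrite (@ncol1 e a b c en0); [ | rewrite /det /Apt /Bpt /Cpt /Dpt /f1 /f2 /f3 /f4 /=;
        by (left; field) || (right; field)])
end; lia.
Qed.
Definition P (s : seq pt) (i : nat) : bool :=
  ~~ collinear (nth (0%R, 0%R) s i) (nth (0%R, 0%R) s i.+1) (nth (0%R, 0%R) s i.+2).

Lemma cnt_count s : cnt s = count (P s) (iota 0 (size s - 2)).
Proof.
elim: s => [|a t IH] //.
case: t IH => [|b [|c r]] IH //.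
rewrite /= in IH *; rewrite IH; have -> : ((size r).+2 - 2 = size r)%N by lia. rewrite -[1%N]/(1 + 0)%N iotaDl count_map.
congr (_ + _); by apply: eq_count => i /=.
Qed.

Lemma N_cnt s : (2 <= size s)%N -> size (inflection_points s) = (cnt s + 2)%N.
Proof.
move=> Hs; rewrite /inflection_points size_map size_filter cnt_count.
have [k Hk] : exists k, size s = k.+2 by exists (size s - 2); lia.
have -> : iota 0 (size s) = 0 :: iota 1 k ++ [:: k.+1].
  rewrite Hk (_ : iota 0 k.+2 = 0 :: iota 1 k.+1) //.
  by rewrite -[k.+1]addn1 iotaD addnC.
rewrite /= count_cat /= -[1%N]/(1 + 0)%N iotaDl count_map.
have -> : keep s k.+1 by rewrite /keep Hk /= eqxx.
have -> : (size s - 2 = k)%N by lia.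
suff -> : count (preim (addn 1) (keep s)) (iota 0 k) = count (P s) (iota 0 k) by lia.
apply: eq_in_count => i; rewrite mem_iota => /andP [_ lt_ik] /=.
rewrite /keep Hk /= add1n /P /ncol /=.
have -> : (i.+1 == k.+1) = false by apply/eqP; lia.
by [].
Qed.
Lemma N_cntH m : N m.+1 = (cnt (Hilbert m.+1) + 2)%N.
Proof.
rewrite /N N_cnt //; have [e [_ [[t ->] _]]] := shape_all m; by [].
Qed.

Lemma N_step m : N m.+2 = (4 * N m.+1 - (if odd m.+1 then 2 else 4))%N.
Proof.
have -> : N m.+2 = (cnt (Hilbert m.+2) + 2)%N by exact: (N_cntH m.+1).
rewrite N_cntH cnt_step; case: (odd m.+1); lia.
Qed.

Lemma N_closed m : (5 * N m.+1 = 4 ^ m.+2 + (if odd m.+1 then 4 else 6))%N.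
Proof.
elim: m => [|m IH].
  rewrite N_cntH /=; vm_compute; reflexivity.
rewrite N_step expnS.
move: IH; have -> : odd m.+2 = ~~ odd m.+1 by [].
case: (odd m.+1) => /= IH; lia.
Qed.

Lemma oddD2 j : odd (2 * j) = false.
Proof. by rewrite oddM. Qed.

Theorem mainTheorem9 :
  N 1 = 4 /\
  (forall k : nat, (1 <= k)%N ->
     N (2 * k) = (4 * N (2 * k - 1) - 2)%N /\
     N (2 * k + 1) = (4 * N (2 * k) - 4)%N) /\
  (forall n : nat, (1 <= n)%N ->
     N n = (if odd n then (4 ^ n.+1 + 4) %/ 5 else (4 ^ n.+1 + 6) %/ 5)%N).
Proof.
split; first by have := N_closed 0; rewrite /=; lia.
split.
  case=> [|j] // _.
  have E1 : (2 * j.+1 = (2 * j).+2)%N by lia.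
  have E2 : (2 * j.+1 - 1 = (2 * j).+1)%N by lia.
  have E3 : (2 * j.+1 + 1 = (2 * j).+1.+2)%N by lia.
  rewrite E2 E3 E1 !N_step /= oddD2 /=; split => //.
case=> [|m] // _.
have H := N_closed m.
by case: (odd m.+1) in H *; rewrite -H mulKn.
Qed.
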